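(* Let $D$ be a strongly connected digraph with at least two vertices and let $T$ be a DFS tree of $D$ rooted at $r$. Let $x_1,\ldots,x_k$ be the out-neighbors of $r$ in $T$, and for each $i\in\{1,\ldots,k\}$ let $T_i$ be the subtree of $T$ consisting of $r$, the arc $(r,x_i)$ and all descendants of $x_i$ (so $T=\bigcup_i T_i$ and $V(T_i)\cap V(T_j)=\{r\}$ for $i\ne j$). For each $i$ let $G_{T_i}$ be the undirected graph with vertex set $V(T_i)$ in which $uv$ is an edge whenever $D$ has a backward arc between $u$ and $v$ (in either direction). Then $\chi_A(D)\le \max_{1\le i\le k}\chi(G_{T_i})$.
   Context: Digraphs are finite and loopless; paths and cycles are directed. $\chi$ is the usual chromatic number of an undirected graph; $\chi_A$ is the minimum number of colors in a vertex coloring of a digraph whose color classes all induce acyclic subdigraphs. A DFS tree $T$ of a strongly connected digraph $D$ rooted at $r$ is the spanning out-branching of $D$ produced by a depth-first search of $D$ started at $r$. A vertex $v$ is a descendant of $u$ if $T$ contains a directed $uv$-path. An arc $(u,v)$ of $D$ is a backward arc if $u$ is a descendant of $v$. *)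

(* Defs.v *)
From mathcomp Require Import all_boot.
Set Implicit Arguments. Unset Strict Implicit. Unset Printing Implicit Defensive.

(* A digraph is a finType V with an arc relation e : rel V (loopless assumed
   separately).  A subdigraph/tree is also represented by an arc relation. *)

(* One run of depth-first search, literally: state = (visited vertices,
   stack with current vertex on top, tree arcs produced so far). *)
Inductive dfs_run (V : finType) (e : rel V) (r : V)
  : seq V -> seq V -> seq (V * V) -> Prop :=
| dfs_init : dfs_run e r [:: r] [:: r] [::]
| dfs_push vis u st A w :
    dfs_run e r vis (u :: st) A -> e u w -> w \notin vis ->
    dfs_run e r (w :: vis) (w :: u :: st) ((u, w) :: A)
| dfs_pop vis u st A :
    dfs_run e r vis (u :: st) A -> (forall w, e u w -> w \in vis) ->
    dfs_run e r vis st A.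

Definition dfs_tree (V : finType) (e : rel V) (r : V) (T : rel V) : Prop :=
  exists vis A, dfs_run e r vis [::] A /\ forall u v, T u v = ((u, v) \in A).

Definition descendant (V : finType) (T : rel V) (u v : V) : bool := connect T u v.

Definition backward (V : finType) (e T : rel V) (u v : V) : bool :=
  e u v && descendant T v u.

Definition strongly_connected (V : finType) (e : rel V) : Prop :=
  forall u v : V, connect e u v.

Definition proper_colorable (V : finType) (S : {set V}) (adj : rel V) (k : nat)
  : bool :=
  [exists c : {ffun V -> 'I_k},
    [forall u, forall v, [&& u \in S, v \in S & adj u v] ==> (c u != c v)]].

(* Chromatic number: least k (<= #|V|, which always suffices) admitting a
   proper k-colouring. *)
Definition chi (V : finType) (S : {set V}) (adj : rel V) : nat :=
  \big[minn/#|V|]_(k < #|V|.+1 | proper_colorable S adj k) k.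

Definition induced (V : finType) (e : rel V) (S : {set V}) : rel V :=
  [rel x y | [&& x \in S, y \in S & e x y]].

Definition acyclic_on (V : finType) (e : rel V) (S : {set V}) : bool :=
  ~~ [exists u, exists v, induced e S u v && connect (induced e S) v u].

Definition acyclic_colorable (V : finType) (e : rel V) (k : nat) : bool :=
  [exists c : {ffun V -> 'I_k},
    [forall i : 'I_k, acyclic_on e [set v | c v == i]]].

Definition chiA (V : finType) (e : rel V) : nat :=
  \big[minn/#|V|]_(k < #|V|.+1 | acyclic_colorable e k) k.

Definition subtree_vertices (V : finType) (T : rel V) (r x : V) : {set V} :=
  [set v | (v == r) || descendant T x v].

Definition back_adj (V : finType) (e T : rel V) : rel V :=
  [rel u v | backward e T u v || backward e T v u].

(* Main.v *)
Require Import Defs.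
From mathcomp Require Import all_boot.
Set Implicit Arguments. Unset Strict Implicit. Unset Printing Implicit Defensive.

Fixpoint stack_ok (V : finType) (R : rel V) (s : seq V) : Prop :=
  match s with [::] => True | y :: s' => (forall x, x \in s' -> connect R x y) /\ stack_ok R s' end.

Lemma conn_mono (V : finType) (R R' : rel V) : (forall a b, R a b -> R' a b) ->
  forall x y, connect R x y -> connect R' x y.
Proof.
move=> H x y /connectP [p pth ->]; apply/connectP; exists p => //.
exact: sub_path pth.
Qed.

Lemma stack_mono (V : finType) (R R' : rel V) : (forall a b, R a b -> R' a b) ->
  forall s, stack_ok R s -> stack_ok R' s.
Proof.
move=> H; elim=> [//|y s IH] /= [H1 H2]; split; last exact: IH.
by move=> x /H1; apply: conn_mono.
Qed.

Definition Arel (V : finType) (A : seq (V * V)) : rel V := [rel a b | (a, b) \in A].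

Lemma dfs_inv (V : finType) (e : rel V) (r : V) vis st A :
  dfs_run e r vis st A -> exists fin : seq V,
  [/\ (forall x, (x \in vis) = (x \in st) || (x \in fin)),
      uniq st /\ (forall x, x \in st -> x \notin fin),
      r \in vis /\ stack_ok (Arel A) st,
      (forall a b, (a, b) \in A -> (b \in vis) && (b != r)) /\
      (forall a a' b, (a, b) \in A -> (a', b) \in A -> a = a') /\
      (forall x, x \in vis -> connect (Arel A) r x) &
      (forall u, u \in fin -> forall v, e u v ->
          (v \in vis) && (((v \in fin) && (index u fin < index v fin)) || connect (Arel A) v u))].
Proof.
elim=> {vis st A}.
- exists [::]; split => //.
  + by move=> x; rewrite orbF.
  + by rewrite mem_seq1.
  + by split => //; split => // x; rewrite mem_seq1 => /eqP ->; apply: connect0.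
- move=> vis u st A w _ [fin [Hm [Hu Hd] [Hr Hs] [Ha [Hp Hc]] Hf]] euw wnv.
  have sub : forall a b, Arel A a b -> Arel ((u, w) :: A) a b.
    by move=> a b H; rewrite /Arel /= in_cons; apply/orP; right.
  have uv : u \in vis by rewrite Hm in_cons eqxx.
  exists fin; split.
  + by move=> x; rewrite !in_cons Hm orbA.
  + split.
      rewrite cons_uniq Hu andbT; apply: contra wnv => H; by rewrite Hm H.
    move=> x; rewrite in_cons => /orP [/eqP ->|]; last exact: Hd.
    by apply: contra wnv => H; rewrite Hm H orbT.
  + split; first by rewrite in_cons Hr orbT.
    split; last exact: stack_mono sub _ Hs.
    move=> x xin.
    apply: (@connect_trans _ _ u).
      apply: conn_mono sub _ _ _.
      move: xin; rewrite in_cons => /orP [/eqP ->|]; first exact: connect0.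
      by case: {Hm Hu Hd} st Hs => [//|y s] /= [H1 _] /H1.
    by apply: connect1; rewrite /Arel /= in_cons eqxx.
  + split.
      move=> a b; rewrite in_cons => /orP [/eqP [_ ->]|].
        rewrite in_cons eqxx /=; apply: contra wnv => /eqP ->; done.
      by move=> /Ha /andP [H1 ->]; rewrite in_cons H1 orbT.
    split.
    move=> a a' b; rewrite !in_cons => /orP [/eqP [ea eb]|H1] /orP [/eqP [ea' eb']|H2].
    * by rewrite ea ea'.
    * by move: (Ha _ _ H2) => /andP [H3 _]; move: wnv; rewrite -eb H3.
    * by move: (Ha _ _ H1) => /andP [H3 _]; move: wnv; rewrite -eb' H3.
    * exact: Hp H1 H2.
    move=> x; rewrite in_cons => /orP [/eqP ->|/Hc]; last exact: conn_mono sub _ _.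
    apply: (@connect_trans _ _ u); first exact: conn_mono sub _ _ (Hc _ uv).
    by apply: connect1; rewrite /Arel /= in_cons eqxx.
  + move=> x xf v exv; case/andP: (Hf x xf v exv) => vv /orP [->|H]; rewrite in_cons vv orbT //=.
    by rewrite (conn_mono sub H) orbT.
- move=> vis u st A _ [fin [Hm [Hu Hd] [Hr Hs] [Ha [Hp Hc]] Hf]] Hpop.
  have ufin : u \notin fin by apply: Hd; rewrite in_cons eqxx.
  move: Hu; rewrite /= => /andP [unst Hu].
  exists (u :: fin); split => //.
  + by move=> x; rewrite Hm !in_cons; case: (x == u); case: (x \in st).
  + split => // x xs; rewrite in_cons negb_or Hd ?andbT; last by rewrite in_cons xs orbT.
    by apply: contra unst => /eqP <-.
  + by split => //; case: Hs.
  + move=> x; rewrite in_cons => /orP [/eqP ->|xf] v exv.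
      move: (Hpop v exv) => vv; rewrite vv /=; move: vv; rewrite Hm in_cons => /orP [/orP [/eqP ->|vs]|vf].
      * by rewrite connect0 orbT.
      * by case: Hs => H _; rewrite H // orbT.
      * rewrite /= eqxx in_cons vf orbT /=.
        have : u != v by apply: contra ufin => /eqP ->.
        by move/negbTE => ->.
    case/andP: (Hf x xf v exv) => -> /orP [/andP [vf lt]|->]; last by rewrite orbT.
    rewrite /= in_cons vf orbT /=.
    have -> : (u == x) = false by apply/negbTE; apply: contra ufin => /eqP ->.
    have -> : (u == v) = false by apply/negbTE; apply: contra ufin => /eqP ->.
    by rewrite ltnS lt.
Qed.

Lemma dfs_props (V : finType) (e : rel V) (r : V) (T : rel V) :
  strongly_connected e -> dfs_tree e r T ->
  exists fin : seq V, [/\ forall a b, T a b -> b != r,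
   forall a a' b, T a b -> T a' b -> a = a',
   forall v, connect T r v &
   forall u v, e u v -> ~~ connect T v u -> index u fin < index v fin].
Proof.
move=> sc [vis [A [run HT]]].
have eqT : T =2 Arel A by move=> u v; rewrite HT.
have cT : connect T =2 connect (Arel A) := eq_connect eqT.
have [fin [Hm [_ Hd] [Hr _] [Ha [Hp Hc]] Hf]] := dfs_inv run.
have Hm' : forall x, (x \in vis) = (x \in fin) by move=> x; rewrite Hm.
have allv : forall x, x \in vis.
  have gen : forall p z, z \in vis -> path e z p -> last z p \in vis.
    elim=> [//|y p IH] z zv /= /andP [ezy pth].
    apply: IH pth; have zf : z \in fin by rewrite -Hm'.
    by case/andP: (Hf z zf y ezy).
  move=> x; have /connectP [p pth ->] := sc r x; exact: gen.
exists fin; split.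
- by move=> a b; rewrite eqT => /Ha /andP [].
- by move=> a a' b; rewrite !eqT; exact: Hp.
- by move=> v; rewrite cT; exact: Hc.
- move=> u v euv; rewrite cT => nc.
  have uf : u \in fin by rewrite -Hm'.
  case/andP: (Hf u uf v euv) => _ /orP [/andP [_ ->]//|H].
  by rewrite H in nc.
Qed.

Lemma connect_last (V : finType) (T : rel V) a b :
  connect T a b -> a = b \/ exists q, connect T a q /\ T q b.
Proof.
case/connectP => p; elim/last_ind: p => [_ ->|p z _]; first by left.
rewrite rcons_path last_rcons => /andP [pth Tz] ->; right.
exists (last a p); split => //; apply/connectP; by exists p.
Qed.

Lemma connect_first (V : finType) (T : rel V) a b :
  connect T a b -> a = b \/ exists q, T a q /\ connect T q b.
Proof.
case/connectP => [[|y p]] /=; first by left.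
move=> /andP [Tay pth] ->; right; exists y; split => //; apply/connectP; by exists p.
Qed.

Lemma chain (V : finType) (T : rel V) :
  (forall a a' b, T a b -> T a' b -> a = a') ->
  forall a b v, connect T a v -> connect T b v -> connect T a b || connect T b a.
Proof.
move=> up a b v /connectP [p pth ->]; elim/last_ind: p b pth => [|p z IH] b.
  by move=> _ /= ->; rewrite orbT.
rewrite rcons_path last_rcons => /andP [pth Tz] bz.
case: (connect_last bz) => [->|[q [bq Tqz]]].
  by apply/orP; left; apply/connectP; exists (rcons p z) => //; rewrite ?rcons_path ?pth ?last_rcons.
by have eq := up _ _ _ Tqz Tz; subst q; apply: IH pth bq.
Qed.

Lemma le_path (V : finType) (R : rel V) (f : V -> nat) :
  (forall a b, R a b -> f a < f b) -> forall a b, connect R a b -> f a <= f b.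
Proof.
move=> H a b /connectP [p pth ->]; elim: p a pth => [//|y p IH] a /= /andP [Ray pth].
exact: leq_trans (ltnW (H _ _ Ray)) (IH _ pth).
Qed.

Lemma bigmin_att (V : finType) (P : pred nat) :
  \big[minn/#|V|]_(k < #|V|.+1 | P k) k < #|V| -> P (\big[minn/#|V|]_(k < #|V|.+1 | P k) k).
Proof.
have : (\big[minn/#|V|]_(k < #|V|.+1 | P k) k == #|V|) || P (\big[minn/#|V|]_(k < #|V|.+1 | P k) k).
  apply: (big_ind (fun y => (y == #|V|) || P y)); first by rewrite eqxx.
    by move=> x y /= Hx Hy; rewrite /minn; case: ifP.
  by move=> i ->; rewrite orbT.
by case/orP => [/eqP ->|//]; rewrite ltnn.
Qed.

Lemma bigmin_le (V : finType) (P : pred nat) m :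
  m < #|V|.+1 -> P m -> \big[minn/#|V|]_(k < #|V|.+1 | P k) k <= m.
Proof.
move=> Hm Pm; have : Ordinal Hm \in index_enum 'I_#|V|.+1 by rewrite mem_index_enum.
elim: (index_enum _) => [//|i s IH]; rewrite in_cons big_cons.
case/orP => [/eqP <- /=|/IH H]; first by rewrite Pm geq_minl.
by case: (P i) => //; exact: leq_trans (geq_minr _ _) H.
Qed.

Lemma bigmin_leN (V : finType) (P : pred nat) :
  \big[minn/#|V|]_(k < #|V|.+1 | P k) k <= #|V|.
Proof.
apply: (big_ind (fun y => y <= #|V|)) => //.
  by move=> x y Hx _; exact: leq_trans (geq_minl _ _) Hx.
by move=> i _; rewrite -ltnS.
Qed.

Lemma widen_col (V : finType) (S : {set V}) adj k m :
  k <= m -> proper_colorable S adj k -> proper_colorable S adj m.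
Proof.
move=> km /existsP [c Hc]; apply/existsP; exists [ffun v => widen_ord km (c v)].
apply/forallP => u; apply/forallP => v; apply/implyP => H.
move/forallP: Hc => /(_ u) /forallP /(_ v) /implyP /(_ H).
by rewrite !ffunE; apply: contra => /eqP [] /val_inj ->.
Qed.

Definition sw (m : nat) (a b z : 'I_m) : 'I_m := if z == a then b else if z == b then a else z.

Lemma sw_inj m (a b : 'I_m) : injective (sw a b).
Proof.
apply: (can_inj (g := sw a b)) => z; rewrite /sw.
case: (eqVneq z a) => [->|za].
  by rewrite eqxx; case: (eqVneq b a) => [->|ba] //=; rewrite ?eqxx.
case: (eqVneq z b) => [->|zb]; first by rewrite eqxx.
by rewrite (negbTE za) (negbTE zb).
Qed.

Theorem mainTheorem6 (V : finType) (e : rel V) (r : V) (T : rel V) :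
  irreflexive e ->
  strongly_connected e ->
  1 < #|V| ->
  dfs_tree e r T ->
  chiA e <= \max_(x | T r x) chi (subtree_vertices T r x) (back_adj e T).
Proof.
move=> irr sc card dt.
have [fin [noinr up allr dfs]] := dfs_props sc dt.
set S := subtree_vertices T r.
set m := \max_(x | T r x) chi (S x) (back_adj e T).
case: (leqP #|V| m) => hm; first exact: leq_trans (bigmin_leN _ _) hm.
have Hcol : forall x, T r x -> proper_colorable (S x) (back_adj e T) m.
  move=> x Tx; have cm : chi (S x) (back_adj e T) <= m by rewrite /m; apply: (@leq_bigmax_cond _ (T r) (fun x => chi (S x) (back_adj e T)) x Tx).
  have lt := leq_ltn_trans cm hm; apply: widen_col cm _; exact: bigmin_att.
have conn_r : forall a, connect T a r -> a = r.
  by move=> a /connect_last [//|[q [_ Tq]]]; move: (noinr _ _ Tq); rewrite eqxx.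
have uchild : forall x y v, T r x -> T r y -> connect T x v -> connect T y v -> x = y.
  move=> x y v Tx Ty xv yv.
  wlog: x y Tx Ty xv yv / connect T x y.
    move=> W; case/orP: (chain up xv yv) => H; first exact: W.
    by apply/esym; apply: W.
  case/connect_last => [//|[q [xq Tqy]]].
  have eq := up _ _ _ Tqy Ty; subst q.
  have xr := conn_r _ xq; subst x.
  by move: (noinr _ _ Tx); rewrite eqxx.
have exchild : forall v, v != r -> exists x, T r x && connect T x v.
  move=> v vr; case: (connect_first (allr v)) => [E|[q [Tq qv]]].
    by rewrite E eqxx in vr.
  by exists q; rewrite Tq.
have [v0 v0r] : exists v, v != r.
  have : 0 < #|predC1 r| by rewrite cardC1 -ltnS (ltn_predK card).
  by case/card_gt0P => v; exists v.
have [x0 /andP [Tx0 _]] := exchild _ v0r.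
have /existsP [c0f _] := Hcol _ Tx0.
pose cx x := odflt c0f [pick c : {ffun V -> 'I_m} | [forall u, forall v,
      [&& u \in S x, v \in S x & back_adj e T u v] ==> (c u != c v)]].
have cxP : forall x, T r x -> forall u v, u \in S x -> v \in S x ->
    back_adj e T u v -> cx x u != cx x v.
  move=> x Tx u v uS vS b; rewrite /cx; case: pickP => [c /forallP Hc|H] /=.
    by move: (Hc u) => /forallP /(_ v); rewrite uS vS b.
  by move: (Hcol x Tx) => /existsP [c Hc]; move: (H c); rewrite Hc.
pose px v := odflt r [pick x | T r x && connect T x v].
have pxP : forall v, v != r -> T r (px v) && connect T (px v) v.
  move=> v vr; rewrite /px; case: pickP => [//|H].
  by case: (exchild v vr) => x Hx; move: (H x); rewrite Hx.
pose k0 := c0f r.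
pose col v := if v == r then k0 else sw (cx (px v) r) k0 (cx (px v) v).
have key : forall x, T r x -> forall w, w \in S x -> col w = sw (cx x r) k0 (cx x w).
  move=> x Tx w; rewrite /S /subtree_vertices inE /col.
  case: (eqVneq w r) => [->|wr] /= H.
    by rewrite /sw eqxx.
  case/andP: (pxP w wr) => T1 C1.
  by rewrite (uchild _ _ _ T1 Tx C1 H).
have backS : forall u v, e u v -> connect T v u ->
    exists x, [&& T r x, u \in S x & v \in S x].
  move=> u v euv vu; rewrite /S /subtree_vertices.
  case: (eqVneq v r) => [vr|vr].
    have ur : u != r by apply/eqP => E; subst; move: (irr r); rewrite euv.
    case/andP: (pxP u ur) => T1 C1; by exists (px u); rewrite T1 !inE /descendant C1 vr eqxx !orbT.
  case/andP: (pxP v vr) => T1 C1; exists (px v); rewrite T1 !inE /descendant C1 orbT /=.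
  by rewrite (connect_trans C1 vu) orbT.
have colne : forall u v, e u v -> connect T v u -> col u != col v.
  move=> u v euv vu; case: (backS u v euv vu) => x /and3P [Tx uS vS].
  rewrite (key x Tx u uS) (key x Tx v vS) (inj_eq (@sw_inj _ _ _)).
  apply: cxP => //; by rewrite /back_adj /= /backward /descendant euv vu.
have ac : acyclic_colorable e m.
  apply/existsP; exists [ffun v => col v]; apply/forallP => i.
  rewrite /acyclic_on; apply/negP => /existsP [u /existsP [v /andP [H1 H2]]].
  set R := induced e _ in H1 H2.
  have mono : forall a b, R a b -> index a fin < index b fin.
    move=> a b; rewrite /R /induced /= !inE !ffunE => /and3P [/eqP ca /eqP cb eab].
    apply: (dfs _ _ eab); apply: contraT; rewrite negbK => ba.
    by move: (colne _ _ eab ba); rewrite ca cb eqxx.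
  move: (mono _ _ H1) (le_path mono H2) => lt le.
  by move: (leq_trans lt le); rewrite ltnn.
by apply: bigmin_le => //; rewrite ltnS ltnW.
Qed.
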